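(* Fix an integer $k\ge2$, and let $\alpha=1+\frac{3}{2k}$, $\beta=\frac{1}{5k}$. Let $A\cup B$ be an instance of $(n,n^\alpha,n^\beta)$-Nice Set Cover (with $n^{1/k}$ an integer and every vertex of $B$ having a neighbor in $A$) with optimum $OPT_{NSC}$. Build a digraph $G$ with vertex layers $V_1,\dots,V_{k+2}$ as follows: $V_1\cup\dots\cup V_{k+1}$ is the generalized butterfly of width $n$ and diameter $k$, i.e. $V_i=[n^{1/k}]^k\times\{i\}$ for $i\in[k+1]$ and there is an edge from $(u,i)$ to $(v,i+1)$ iff $u_j=v_j$ for all $j\ne i$; the layer $V_{k+1}$ is identified (by an arbitrary bijection) with $A$; $V_{k+2}=B$; and each edge of the set-cover instance is directed from $A=V_{k+1}$ to $B=V_{k+2}$. Then $S_k(G)=\Theta(OPT_{NSC}\cdot n^{2/k})$, where the hidden constants depend only on $k$ (for $n$ sufficiently large).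
   Context: An $(a',b',c')$-Nice Set Cover instance is a bipartite graph with parts $A$, $B$, $|A|=a'$, $|B|=b'$, $B$ partitioned into blocks $B_1,\dots,B_{a'}$ of size $b'/a'$, such that any $v\in A$ adjacent to some vertex of $B_i$ is adjacent to all of $B_i$, and each $v\in A$ is adjacent to at most $c'$ blocks; $OPT_{NSC}$ is the minimum number of vertices of $A$ covering $B$. For a digraph $G$, a $k$-TC-spanner is a digraph $H$ on the same vertices whose edges lie in the transitive closure of $G$ such that $d_H(u,v)\le k$ whenever $v$ is reachable from $u$ in $G$; $S_k(G)$ is the minimum number of edges of a $k$-TC-spanner. *)

(* Defs.v *)
From HB Require Import structures.
From mathcomp Require Import all_boot all_order all_algebra.
Set Implicit Arguments. Unset Strict Implicit. Unset Printing Implicit Defensive.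

(* Minimum of #|X| over the sets X : {set T} satisfying P
   (default #|{set T}| if none, which never happens in our uses). *)
Definition min_card (T : finType) (P : pred {set T}) : nat :=
  \big[minn/#|{set T}|]_(X : {set T} | P X) #|X|.

Definition covers (A B : finType) (E : A -> B -> bool) (C : {set A}) : bool :=
  [forall b : B, [exists v in C, E v b]].

Definition opt_nsc (A B : finType) (E : A -> B -> bool) : nat :=
  min_card (covers E).

Definition nice_blocks (A B : finType) (E : A -> B -> bool) (I : finType)
  (blk : B -> I) : Prop :=
  forall v b b', E v b -> blk b = blk b' -> E v b'.

Definition nblocks (A B : finType) (E : A -> B -> bool) (I : finType)
  (blk : B -> I) (v : A) : nat :=
  #|[set blk b | b in [set b | E v b]]|.

Definition tc (V : finType) (e : rel V) : rel V :=
  fun u v => [exists w, e u w && connect e w v].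

Fixpoint reach_le (V : finType) (h : rel V) (n : nat) (u v : V) : bool :=
  match n with
  | 0 => u == v
  | n'.+1 => (u == v) || [exists w, h u w && reach_le h n' w v]
  end.

Definition edge_rel (V : finType) (H : {set V * V}) : rel V :=
  fun x y => (x, y) \in H.

Definition is_kTC_spanner (V : finType) (k : nat) (e : rel V)
  (H : {set V * V}) : bool :=
  [forall p in H, tc e p.1 p.2] &&
  [forall u, forall v, connect e u v ==> reach_le (edge_rel H) k u v].

Definition S_k (V : finType) (k : nat) (e : rel V) : nat :=
  min_card (is_kTC_spanner k e).

(* [m]^k, with m = n^{1/k} *)
Definition BV (k m : nat) : finType := {ffun 'I_k -> 'I_m}.

(* vertices: layers V_1..V_{k+1} (0-indexed by 'I_k.+1) of the butterfly,
   layer V_{k+1} (index k) being identified with A, and V_{k+2} = B *)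
Definition gvert (k m : nat) (B : finType) : finType :=
  (('I_k.+1 * BV k m) + B)%type.

Definition gedge (k m : nat) (A B : finType) (phi : BV k m -> A)
  (E : A -> B -> bool) : rel (gvert k m B) :=
  fun x y =>
    match x, y with
    | inl (i, u), inl (i', v) =>
        (nat_of_ord i' == (nat_of_ord i).+1) &&
        [forall j : 'I_k, (nat_of_ord j != nat_of_ord i) ==> (u j == v j)]
    | inl (i, u), inr b => (nat_of_ord i == k) && E (phi u) b
    | _, _ => false
    end.

(* Main.v *)
From Stdlib Require Import Lia.
Require Import Defs.
From HB Require Import structures.
From mathcomp Require Import all_boot all_order all_algebra.
Set Implicit Arguments. Unset Strict Implicit. Unset Printing Implicit Defensive.

Ltac slia :=
  repeat (match goal with H : context [isSub.val_subdef _] |- _ => progress simpl in H end);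
  repeat (match goal with
  | H : is_true (_ || _) |- _ => case/orP: H => H
  | H : is_true (_ && _) |- _ => case/andP: H => ? ?
  | H : is_true (~~ (_ == _)) |- _ => move/eqP: H => H
  | H : is_true (~~ (_ <= _)) |- _ => rewrite -ltnNge in H
  | H : is_true (_ <= _) |- _ => move/leP: H => H
  | H : is_true (_ < _) |- _ => move/ltP: H => H
  | H : is_true (_ == _) |- _ => move/eqP: H => H
  end);
  (match goal with
   | |- is_true (~~ (_ == _)) => apply/eqP; move=> ?
   | |- is_true (_ <= _) => apply/leP
   | |- is_true (_ == _) => apply/eqP
   | _ => idtac end);
  repeat (match goal with H : context [addn] |- _ => rewrite -plusE in H
  | H : context [subn] |- _ => rewrite -minusE in H
  | H : context [muln] |- _ => rewrite -multE in H end);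
  rewrite -?plusE -?minusE -?multE; lia.

Lemma card_bigcup_le (I T : finType) (P : pred I) (F : I -> {set T}) :
  #|\bigcup_(i | P i) F i| <= \sum_(i | P i) #|F i|.
Proof.
elim/big_rec2: _ => [|i n U _ le]; first by rewrite cards0.
by rewrite (leq_trans (leq_card_setU _ _).1) ?leq_add2l.
Qed.

Lemma reach_le_mono (V : finType) (h : rel V) n n' u v :
  n <= n' -> reach_le h n u v -> reach_le h n' u v.
Proof.
elim: n n' u => [|n IH] [|n'] u //=.
- by move=> _ ->.
- move=> le /orP[->//|/existsP[w /andP[hw hr]]].
  apply/orP; right; apply/existsP; exists w; rewrite hw /=; exact: IH hr.
Qed.

Lemma reach_le_cat (V : finType) (h : rel V) a b u w v :
  reach_le h a u w -> reach_le h b w v -> reach_le h (a + b) u v.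
Proof.
elim: a u => [|a IH] u.
- by move/eqP->.
- move=> /orP[/eqP-> hb|/existsP[x /andP[hx hr]] hb].
  + apply: (reach_le_mono _ hb); exact: leq_addl.
  + rewrite addSn /=; apply/orP; right; apply/existsP; exists x.
    by rewrite hx /=; apply: IH.
Qed.

Lemma reach_le_connect (V : finType) (h e : rel V) n u v :
  (forall x y, h x y -> connect e x y) -> reach_le h n u v -> connect e u v.
Proof.
move=> he; elim: n u => [|n IH] u /=; first by move/eqP->.
move=> /orP[/eqP->//|/existsP[x /andP[hx hr]]].
exact: connect_trans (he _ _ hx) (IH _ hr).
Qed.

Lemma min_card_le (T : finType) (P : pred {set T}) X : P X -> min_card P <= #|X|.
Proof.
move=> PX; rewrite /min_card.
have : X \in index_enum {set T} by rewrite mem_index_enum.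
elim: (index_enum _) => [//|Y r IH]; rewrite inE big_cons.
case/orP=> [/eqP<-|Xr]; first by rewrite PX geq_minl.
case: (P Y); last exact: IH.
exact: leq_trans (geq_minr _ _) (IH Xr).
Qed.

Lemma min_card_attained (T : finType) (P : pred {set T}) X0 :
  P X0 -> exists X, P X /\ min_card P = #|X|.
Proof.
move=> PX0.
have lt : min_card P < #|{set T}|.
  apply: leq_ltn_trans (min_card_le PX0) _.
  apply: leq_ltn_trans (max_card _) _.
  apply: leq_trans (ltn_expl _ (isT : 1 < 2)) _.
  by rewrite -cardsT -card_powerset max_card.
have : (min_card P == #|{set T}|) || [exists X, P X && (min_card P == #|X|)].
  rewrite /min_card; apply: (big_ind (fun v => (v == #|{set T}|) || [exists X, P X && (v == #|X|)])).
  - by rewrite eqxx.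
  - by move=> x y hx hy; case: (leqP x y).
  - move=> X PX; apply/orP; right; apply/existsP; exists X; by rewrite PX eqxx.
case/orP=> [/eqP eq|/existsP[X /andP[PX /eqP eq]]]; last by exists X.
by move: lt; rewrite eq ltnn.
Qed.

Section Graph.
Variable k' : nat.
Local Notation k := k'.+2.
Variables (m : nat) (A B : finType) (phi : BV k m -> A) (E : A -> B -> bool).
Local Notation V := (gvert k m B).
Local Notation e := (gedge phi E).

Definition lay (v : V) : nat := match v with inl p => p.1 | inr _ => k.+1 end.
Definition isB (v : V) : bool := if v is inr _ then true else false.

Definition agree (i j : nat) (x y : BV k m) :=
  forall c : 'I_k, (c < i) || (j <= c) -> x c = y c.

Definition R (u v : V) : Prop :=
  match u, v with
  | inl (i, x), inl (j, y) => i <= j /\ agree i j x y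
  | inl (i, x), inr b => exists y : BV k m, (forall c : 'I_k, c < i -> x c = y c) /\ E (phi y) b
  | inr b, inr b' => b = b'
  | inr _, inl _ => False
  end.

Lemma R_refl u : R u u.
Proof. by case: u => [[i x]|b] //=. Qed.

Lemma R_step u w v : e u w -> R w v -> R u v.
Proof.
case: u => [[i x]|b] //; case: w => [[i2 x2]|b2] //=.
- move=> /andP[/eqP ei /forallP hx].
  have hx' : forall c : 'I_k, (c : nat) != i -> x c = x2 c.
    by move=> c hc; apply/eqP; move: (hx c); rewrite hc.
  case: v => [[j y]|b] /=.
  + move=> [hij hag]; split; first by slia.
    move=> c hc; rewrite hx'; last by move: hc; case/orP => hc; slia.
    by apply: hag; case/orP: hc => hc; apply/orP; [left|right]; slia.
  + move=> [y [hy hE]]; exists y; split=> // c hc.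
    by rewrite hx'; [apply: hy; slia | slia].
- move=> /andP[_ hE]; case: v => [[j y]|b'] //= <-.
  by exists x.
Qed.

Lemma connect_R u v : connect e u v -> R u v.
Proof.
move/connectP=> [p pth ->]; elim: p u pth => [|w p IH] u /=; first by move=> _; apply: R_refl.
by case/andP=> euw pth; apply: R_step euw (IH _ pth).
Qed.

Lemma R_lay u v : R u v -> lay u <= lay v.
Proof.
case: u => [[i x]|b]; case: v => [[j y]|b'] //=; first by case.
by move=> _; apply: ltnW; apply: ltn_ord.
Qed.

Lemma e_lay u v : e u v -> lay v = (lay u).+1.
Proof.
case: u => [[i x]|b]; case: v => [[j y]|b'] //=.
- by case/andP=> /eqP.
- by case/andP=> /eqP ->.
Qed.

Lemma tc_lay u v : tc e u v -> lay u < lay v.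
Proof.
case/existsP=> w /andP[euw cw]; rewrite -(e_lay euw).
exact: R_lay (connect_R cw).
Qed.

Lemma tc_connect u v : tc e u v -> connect e u v.
Proof. by case/existsP=> w /andP[euw cw]; apply: connect_trans (connect1 euw) cw. Qed.

Lemma bpath (h : rel V) (hE : forall x y, e x y -> h x y) d :
  forall i x y, i + d <= k -> agree i (i + d) x y ->
  reach_le h d (inl (inord i, x)) (inl (inord (i + d), y)).
Proof.
elim: d => [|d IH] i x y hid hag.
- have -> : x = y by apply/ffunP => c; apply: hag; rewrite addn0; case: ltnP.
  by rewrite addn0 /= eqxx.
- set x' := [ffun c : 'I_k => if val c == i then y c else x c].
  rewrite /=; apply/orP; right; apply/existsP; exists (inl (inord i.+1, x')).
  apply/andP; split.
  + apply: hE => /=; rewrite !inordK; try slia.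
    rewrite eqxx /=; apply/forallP => c; apply/implyP => hc.
    by rewrite /x' ffunE (negbTE hc).
  + rewrite -addSnnS; apply: IH; first by slia.
    move=> c hc; rewrite /x' ffunE; case: eqP => ci //.
    apply: hag; case/orP: hc => hc; apply/orP; [left|right]; slia.
Qed.



Lemma anc_bound (i : 'I_k.+1) x :
  #|[set u : BV k m | connect e (inl (inord 0, u)) (inl (i, x))]| <= m ^ i.
Proof.
set S := [set u | _].
have inj : {in S &, injective (fun u : BV k m => [ffun c : 'I_i => u (inord c)])}.
  move=> u1 u2; rewrite !inE => /connect_R [_ h1] /connect_R [_ h2] eq.
  apply/ffunP => c; case: (ltnP c i) => hc.
  - have := congr1 (fun f : {ffun 'I_i -> 'I_m} => f (Ordinal hc)) eq; rewrite !ffunE /=.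
    by rewrite inord_val.
  - by rewrite h1 ?h2 // hc orbT.
by have := leq_card_in _ _ inj; rewrite card_ffun !card_ord.
Qed.

Lemma desc_bound (j : nat) (y : BV k m) : j <= k ->
  #|[set w : BV k m | [forall c : 'I_k, (c < j) ==> (w c == y c)]]| <= m ^ (k - j).
Proof.
move=> hj; set S := [set w | _].
have inj : {in S &, injective (fun w : BV k m => [ffun c : 'I_(k - j) => w (inord (j + c))])}.
  move=> w1 w2; rewrite !inE => /forallP h1 /forallP h2 eq.
  apply/ffunP => c; case: (ltnP c j) => hc.
  - by move: (h1 c) (h2 c); rewrite hc /= => /eqP-> /eqP->.
  - have hck := ltn_ord c; have hc' : c - j < k - j by slia.
    have := congr1 (fun f : {ffun 'I_(k - j) -> 'I_m} => f (Ordinal hc')) eq; rewrite !ffunE /=.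
    have -> : inord (j + (c - j)) = c :> 'I_k.
      apply: val_inj; rewrite /= inordK; slia.
    by [].
by have := leq_card_in _ _ inj; rewrite card_ffun !card_ord.
Qed.



Section Lower.
Variables (I : finType) (blk : B -> I) (s : nat).
Hypothesis Hblk : forall i, #|[set b | blk b == i]| = s.
Hypothesis Hnice : nice_blocks E blk.
Hypothesis Hnb : forall b, exists v, E v b.
Hypothesis Hm : 0 < m.
Hypothesis Hms : m <= s.
Hypothesis Hbij : bijective phi.
Variable H : {set V * V}.
Hypothesis Hsp : is_kTC_spanner k e H.

Definition nb b : A := xchoose (Hnb b).
Lemma nbP b : E (nb b) b.
Proof. exact: (xchooseP (Hnb b)). Qed.

Definition u0 (u : BV k m) : V := inl (inord 0, u).
Definition cn u v := connect e (u0 u) v.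
Definition long (p : V * V) := ~~ isB p.1 && ~~ isB p.2 && (lay p.1 + 2 <= lay p.2).
Definition Dd (v : V) : {set A} :=
  match v with
  | inl (j, y) => phi @: [set w : BV k m | [forall c : 'I_k, (c < j) ==> (w c == y c)]]
  | inr _ => set0
  end.
Definition T1 u := \bigcup_(p in H | cn u p.1 && long p) Dd p.2.
Definition F2 u (y : V) := ~~ isB y && (lay y <= k') && cn u y.
Definition F3 u (y : V) := ~~ isB y && (lay y == k'.+1) && cn u y.
Definition B2 u := [set b | [exists y, ((y, inr b) \in H) && F2 u y]].
Definition T2 u := nb @: B2 u.
Definition Q u := [set i | [forall b, (blk b == i) ==> [exists y, ((y, inr b) \in H) && F3 u y]]].
Definition T3 u := \bigcup_(i in Q u)
  (if [pick b | blk b == i] is Some b0 then [set nb b0] else set0).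
Definition Cu u := T1 u :|: T2 u :|: T3 u.

Lemma Htc x y : (x, y) \in H -> tc e x y.
Proof. by move: Hsp; rewrite /is_kTC_spanner => /andP[/forall_inP h _] /h. Qed.

Lemma Hreach u v : connect e u v -> reach_le (edge_rel H) k u v.
Proof. by move: Hsp; rewrite /is_kTC_spanner => /andP[_ /forallP h]; move: (h u) => /forallP /(_ v) /implyP. Qed.

Lemma reach_inr n b v : reach_le (edge_rel H) n (inr b) v -> v = inr b.
Proof.
case: n => [|n] /=; first by move/eqP.
case/orP => [/eqP//|/existsP[w /andP[hw _]]].
by have /existsP[w1 /andP[]] := Htc hw.
Qed.

Lemma claim u b n : forall x, lay x + n <= k -> cn u x ->
  reach_le (edge_rel H) n x (inr b) ->
  [exists c in T1 u :|: T2 u, E c b] \/ [exists y, ((y, inr b) \in H) && F3 u y].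
Proof.
elim: n => [|n IH] [[i xv]|b'] hl hc //=.
- by exfalso; move: hl => /= hl; slia.
- case/existsP=> w /andP[hw hr].
  have tcw := Htc hw; have lw := tc_lay tcw.
  case: w hw hr tcw lw => [[j wv]|b2] hw hr tcw lw.
  + case: (leqP (i + 2) j) => hij.
    * left; have /connect_R := reach_le_connect (fun x y h => tc_connect (Htc h)) hr.
      move=> /= [y [hy hE]]; apply/existsP; exists (phi y); rewrite hE andbT.
      rewrite !inE; apply/orP; left; apply/bigcupP; exists (inl (i, xv), inl (j, wv)).
      - by apply/andP; split; [exact: hw | rewrite /= hc /long /= hij].
      - apply: imset_f; rewrite inE; apply/forallP=> c; apply/implyP=> hcj.
        by rewrite hy.
    * apply: (IH (inl (j, wv))).
      - move: hl lw => /= hl lw; slia.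
      - exact: connect_trans hc (tc_connect tcw).
      - exact: hr.
  + have [eb] : inr b = inr b2 := reach_inr hr.
    move: hw; rewrite -eb => hw.
    move: hl lw => /= hl lw.
    case: (leqP i k') => hik.
    * left; apply/existsP; exists (nb b); rewrite nbP andbT !inE; apply/orP; right.
      apply: imset_f; rewrite inE; apply/existsP; exists (inl (i, xv)).
      by apply/andP; split; [exact: hw | rewrite /F2 /= hik hc].
    * right; apply/existsP; exists (inl (i, xv)); apply/andP; split; first exact: hw.
      rewrite /F3 /= hc andbT; apply/eqP; slia.
- by exfalso; move: hl => /= hl; slia.
Qed.



Lemma reach0 u b : cn u (inr b).
Proof.
case: (Hnb b) => a hab; case: Hbij => psi h1 h2.
have hp := @bpath e (fun x y h => h) k 0 u (psi a) (leqnn _).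
have hc : connect e (u0 u) (inl (inord (0 + k), psi a)).
  apply: (reach_le_connect (h := e) (fun x y h => connect1 h)); apply: hp.
  by move=> c /orP[//|]; rewrite add0n leqNgt ltn_ord.
rewrite /cn; apply: connect_trans hc (connect1 _) => /=.
by rewrite inordK ?add0n // eqxx h2.
Qed.

Lemma cover u : covers E (Cu u).
Proof.
have cl : forall b, [exists c in T1 u :|: T2 u, E c b] \/ [exists y, ((y, inr b) \in H) && F3 u y].
  move=> b; apply: (claim (x := u0 u) (n := k)).
  - by rewrite /= inordK.
  - exact: connect0.
  - exact: Hreach (reach0 u b).
apply/forallP => b.
case: (boolP [exists b', (blk b' == blk b) && [exists c in T1 u :|: T2 u, E c b']]).
- case/existsP => b' /andP[/eqP hb' /exists_inP[c hc hE]].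
  apply/exists_inP; exists c; first by rewrite /Cu inE hc.
  exact: Hnice hE hb'.
- move/existsPn => hn.
  have hQ : blk b \in Q u.
    rewrite inE; apply/forallP => b'; apply/implyP => /eqP hb'.
    case: (cl b') => // h1; exfalso; move: (hn b'); by rewrite hb' eqxx h1.
  have [b0 /eqP hb0 hp] : exists2 b0, blk b0 == blk b & [pick b0 | blk b0 == blk b] = Some b0.
    by case: pickP => [b0 hb0 | hn0]; [exists b0 | move: (hn0 b); rewrite eqxx].
  apply/exists_inP; exists (nb b0).
  + rewrite /Cu inE; apply/orP; right; apply/bigcupP; exists (blk b) => //.
    by rewrite hp inE.
  + exact: Hnice (nbP b0) hb0.
Qed.


Lemma card_sum_bool (T : finType) (D : {pred T}) (P : pred T) :
  #|[set p in D | P p]| = \sum_(p in D) P p.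
Proof.
rewrite -sum1_card big_mkcond [RHS]big_mkcond; apply: eq_bigr => p _.
by rewrite inE; case: (p \in D); case: (P p).
Qed.

Lemma Lcount (F : V -> bool) :
  #|[set b | [exists y, ((y, inr b) \in H) && F y]]| <= \sum_(p in H) (F p.1 && isB p.2).
Proof.
set S := [set b | _].
pose f (b : B) : V * V := (odflt (inr b) [pick y | ((y, inr b) \in H) && F y], inr b).
have finj : injective f by move=> b1 b2 [] _ ->.
rewrite -(card_imset S finj) -card_sum_bool; apply: subset_leq_card.
apply/subsetP => p /imsetP[b]; rewrite inE => /existsP[y0 hy0] ->.
rewrite inE /f; case: pickP => [y /andP[hy hF]|hn] /=.
- by rewrite hy hF.
- by move: (hn y0); rewrite hy0.
Qed.

Definition W1 (p : V * V) := if long p then m ^ (k - lay p.2) else 0.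
Definition W2 (p : V * V) : nat := isB p.2 && ~~ isB p.1 && (lay p.1 <= k').
Definition W3 (p : V * V) : nat := isB p.2 && ~~ isB p.1 && (lay p.1 == k'.+1).

Lemma card_T1 u : #|T1 u| <= \sum_(p in H) (if cn u p.1 then W1 p else 0).
Proof.
apply: leq_trans (card_bigcup_le _ _) _.
rewrite big_mkcond [X in _ <= X]big_mkcond /=; apply: leq_sum => p _.
case: (p \in H) => //=; case: (cn u p.1) => //=.
rewrite /W1; case: (long p) => //.
case: p => x [[j y]|b] //=.
- apply: leq_trans (leq_imset_card _ _) _.
  by apply: desc_bound; rewrite -ltnS ltn_ord.
- by rewrite cards0.
Qed.

Lemma card_T2 u : #|T2 u| <= \sum_(p in H) (if cn u p.1 then W2 p else 0).
Proof.
apply: leq_trans (leq_imset_card _ _) _.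
apply: leq_trans (Lcount (F2 u)) _.
apply: leq_sum => p _; rewrite /F2 /W2.
by case: (cn u p.1); rewrite ?andbF ?andbT //=; case: (isB p.1); case: (isB p.2); case: (lay p.1 <= k').
Qed.

Lemma card_Q u : s * #|Q u| <= \sum_(p in H) (if cn u p.1 then W3 p else 0).
Proof.
have h1 : s * #|Q u| <= #|[set b | blk b \in Q u]|.
  rewrite -[X in _ <= X]sum1_card (partition_big blk (mem (Q u))) => [|b]; last by rewrite inE.
  rewrite mulnC -sum_nat_const; apply: leq_sum => i iQ.
  rewrite -(Hblk i) -[#|_|]muln1 -sum_nat_cond_const; apply: eq_leq; apply: eq_bigl => b.
  by rewrite inE; case: (blk b =P i) => [->|]; rewrite ?iQ ?andbF.
have h2 : #|[set b | blk b \in Q u]| <= #|[set b | [exists y, ((y, inr b) \in H) && F3 u y]]|.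
  apply: subset_leq_card; apply/subsetP => b; rewrite !inE => /forallP /(_ b).
  by rewrite eqxx.
apply: leq_trans h1 _; apply: leq_trans h2 _; apply: leq_trans (Lcount (F3 u)) _.
apply: leq_sum => p _; rewrite /F3 /W3.
by case: (cn u p.1); rewrite ?andbF ?andbT //=; case: (isB p.1); case: (isB p.2); case: (lay p.1 == k'.+1).
Qed.


Lemma sum_swap (W : V * V -> nat) :
  \sum_(u : BV k m) \sum_(p in H) (if cn u p.1 then W p else 0) =
  \sum_(p in H) W p * #|[set u | cn u p.1]|.
Proof.
rewrite exchange_big; apply: eq_bigr => p _.
by rewrite -big_mkcond /= sum_nat_cond_const mulnC.
Qed.

Lemma sum_bound (W : V * V -> nat) M :
  (forall p, p \in H -> W p * #|[set u | cn u p.1]| <= M) ->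
  \sum_(p in H) W p * #|[set u | cn u p.1]| <= #|H| * M.
Proof. by move=> h; rewrite -sum_nat_const; apply: leq_sum => p; apply: h. Qed.

Lemma anc_cn (i : 'I_k.+1) x : #|[set u | cn u (inl (i, x))]| <= m ^ i.
Proof. exact: anc_bound. Qed.

Lemma W1_bound p : W1 p * #|[set u | cn u p.1]| <= m ^ k'.
Proof.
case: p => [[[i x]|b] [[j y]|b']]; rewrite /W1 /long /= ?mul0n //.
case: ifP => hij; last by rewrite mul0n.
apply: leq_trans (leq_mul (leqnn _) (anc_cn i x)) _.
have hj := ltn_ord j; rewrite -expnD; apply: leq_pexp2l => //; slia.
Qed.

Lemma W2_bound p : W2 p * #|[set u | cn u p.1]| <= m ^ k'.
Proof.
case: p => [[[i x]|b] [[j y]|b']]; rewrite /W2 /= ?mul0n //.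
case: (leqP i k') => hi; rewrite ?mul0n ?mul1n //.
apply: leq_trans (anc_cn i x) _; exact: leq_pexp2l.
Qed.

Lemma W3_bound p : W3 p * #|[set u | cn u p.1]| <= m ^ k'.+1.
Proof.
case: p => [[[i x]|b] [[j y]|b']]; rewrite /W3 /= ?mul0n //.
case: (nat_of_ord i =P k'.+1) => hi; rewrite ?mul0n ?mul1n //.
by apply: leq_trans (anc_cn i x) _; rewrite hi.
Qed.

Lemma lower : m ^ 2 * opt_nsc E <= 3 * #|H|.
Proof.
have hT3 u : #|T3 u| <= #|Q u|.
  apply: leq_trans (card_bigcup_le _ _) _; rewrite -sum1_card; apply: leq_sum => i _.
  by case: [pick _ | _] => [b0|]; rewrite ?cards1 ?cards0.
have hCu u : #|Cu u| <= #|T1 u| + #|T2 u| + #|Q u|.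
  rewrite /Cu; apply: leq_trans (leq_card_setU (T1 u :|: T2 u) (T3 u)).1 _.
  by rewrite leq_add ?hT3 // (leq_card_setU (T1 u) (T2 u)).1.
have S1 : \sum_(u : BV k m) #|T1 u| <= #|H| * m ^ k'.
  apply: (@leq_trans (\sum_(u : BV k m) \sum_(p in H) (if cn u p.1 then W1 p else 0))).
    by apply: leq_sum => u _; exact: card_T1.
  rewrite sum_swap.
  apply: sum_bound => p _; exact: W1_bound.
have S2 : \sum_(u : BV k m) #|T2 u| <= #|H| * m ^ k'.
  apply: (@leq_trans (\sum_(u : BV k m) \sum_(p in H) (if cn u p.1 then W2 p else 0))).
    by apply: leq_sum => u _; exact: card_T2.
  rewrite sum_swap.
  apply: sum_bound => p _; exact: W2_bound.
have S3 : \sum_(u : BV k m) #|Q u| <= #|H| * m ^ k'.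
  have s0 : 0 < s by apply: leq_trans Hm Hms.
  rewrite -(leq_pmul2l s0) big_distrr /=.
  apply: (@leq_trans (\sum_(u : BV k m) \sum_(p in H) (if cn u p.1 then W3 p else 0))).
    by apply: leq_sum => u _; exact: card_Q.
  rewrite sum_swap.
  apply: leq_trans (sum_bound (M := m ^ k'.+1) _) _; first by move=> p _; exact: W3_bound.
  by rewrite expnSr mulnA [s * _]mulnC leq_mul2l Hms orbT.
have Sopt : \sum_(u : BV k m) opt_nsc E <= \sum_(u : BV k m) #|Cu u|.
  by apply: leq_sum => u _; apply: min_card_le; apply: cover.
rewrite sum_nat_const card_ffun !card_ord in Sopt.
have : m ^ k * opt_nsc E <= m ^ k' * (3 * #|H|).
  apply: leq_trans Sopt _.
  apply: (@leq_trans (\sum_(u : BV k m) (#|T1 u| + #|T2 u| + #|Q u|))).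
    by apply: leq_sum => u _; exact: hCu.
  rewrite !big_split /=.
  have -> : m ^ k' * (3 * #|H|) = #|H| * m ^ k' + #|H| * m ^ k' + #|H| * m ^ k'.
    by rewrite mulnC -mulnA mulnC; slia.
  by rewrite !leq_add.
have e2 : m ^ k = m ^ k' * m ^ 2 by rewrite -expnD addn2.
have hp : 0 < m ^ k' by rewrite expn_gt0 Hm.
by rewrite e2 -mulnA (leq_pmul2l hp).
Qed.

End Lower.

Section Upper.
Variables (I : finType) (blk : B -> I) (s : nat).
Hypothesis Hblk : forall i, #|[set b | blk b == i]| = s.
Variables (psi : A -> BV k m).
Hypothesis Hpsi1 : cancel phi psi.
Hypothesis Hpsi2 : cancel psi phi.
Variable C : {set A}.
Hypothesis HC : covers E C.

Lemma k'_lt : k' < k.+1. Proof. by rewrite ltnS ltnW. Qed.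
Lemma k_lt : k < k.+1. Proof. by []. Qed.

Definition Hc : {set V * V} := [set p : V * V |
  match p with
  | (inl (i, w), inl (j, y)) => (nat_of_ord i == k') && (nat_of_ord j == k) &&
      (phi y \in C) && [forall c : 'I_k, (c < k') ==> (w c == y c)]
  | _ => false
  end].
Definition Ge : {set V * V} := [set p : V * V | e p.1 p.2].
Definition H0 := Ge :|: Hc.

Lemma hE0 x y : e x y -> edge_rel H0 x y.
Proof. by move=> h; rewrite /edge_rel !inE /= h. Qed.

Lemma H0_tc p : p \in H0 -> tc e p.1 p.2.
Proof.
rewrite !inE => /orP[h|].
- by apply/existsP; exists p.2; rewrite h connect0.
case: p => [[[i w]|b] [[j y]|b']] //= /andP[/andP[/andP[/eqP hi /eqP hj] _] /forallP hw].
have hp := @bpath e (fun x y h => h) 2 k' w y (eq_leq (addn2 _)).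
have hag : agree k' (k' + 2) w y.
  move=> c /orP[hc|hc]; first by move: (hw c); rewrite hc => /eqP.
  by exfalso; have hc2 := ltn_ord c; slia.
move: (hp hag).
have -> : inord k' = i.
  apply: val_inj; rewrite /= inordK; first exact: (esym hi). slia.
have -> : inord (k' + 2) = j.
  apply: val_inj; rewrite /= inordK addn2; first exact: (esym hj). slia.
case/orP=> [/eqP [hij _]|/existsP[w1 /andP[h1 h2]]].
- by exfalso; rewrite hij in hi; slia.
- apply/existsP; exists w1; apply/andP; split; first exact: h1.
  exact: (@reach_le_connect _ e e 1 _ _ (fun x y h => connect1 h) h2).
Qed.

Lemma reach_edge x y : edge_rel H0 x y -> reach_le (edge_rel H0) 1 x y.
Proof. by move=> h /=; apply/orP; right; apply/existsP; exists y; rewrite h eqxx. Qed.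

Lemma H0_reach u v : connect e u v -> reach_le (edge_rel H0) k u v.
Proof.
move/connect_R; case: u => [[i x]|b]; case: v => [[j y]|b'] //=.
- move=> [hij hag]; change (reach_le (edge_rel H0) k (inl (i, x)) (inl (j, y))).
  have hp := @bpath _ hE0 (j - i) i x y.
  rewrite subnKC // !inord_val in hp.
  have hjk : j <= k by rewrite -ltnS ltn_ord.
  apply: (reach_le_mono _ (hp hjk hag)).
  by apply: leq_trans (leq_subr _ _) _.
- move=> [y [hy hEy]]; change (reach_le (edge_rel H0) k (inl (i, x)) (inr b')).
  have hlast : reach_le (edge_rel H0) 1 (inl (inord k, y)) (inr b').
    by apply: reach_edge; apply: hE0; rewrite /= (inordK k_lt) eqxx.
  case: (posnP i) => hi.
  + have [c hc hEc] := exists_inP (forallP HC b').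
    set y' := psi c.
    set w := [ffun c0 : 'I_k => if c0 < k' then y' c0 else x c0].
    have hp := @bpath _ hE0 k' 0 x w (ltnW (ltnW (leqnn _))).
    have hag : agree 0 (0 + k') x w.
      by move=> c0 /orP[//|hc0]; rewrite add0n in hc0; rewrite /w ffunE ltnNge hc0.
    move: (hp hag); rewrite add0n => hp1.
    have he2 : reach_le (edge_rel H0) 1 (inl (inord k', w)) (inl (inord k, y')).
      apply: reach_edge; rewrite /edge_rel !inE; apply/orP; right.
      rewrite /= (inordK k_lt) (inordK k'_lt) !eqxx /y' Hpsi2 hc /=.
      by apply/forallP => c0; apply/implyP => hc0; rewrite /w ffunE hc0.
    have he3 : reach_le (edge_rel H0) 1 (inl (inord k, y')) (inr b').
      by apply: reach_edge; apply: hE0; rewrite /= (inordK k_lt) eqxx /y' Hpsi2.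
    have -> : i = inord 0 by apply: val_inj; rewrite /= inordK.
    have := reach_le_cat (reach_le_cat hp1 he2) he3.
    by rewrite addn1 addn1.
  + have hp := @bpath _ hE0 (k - i) i x y.
    rewrite subnKC ?inord_val in hp; last by rewrite -ltnS ltn_ord.
    have hag : agree i k x y.
      move=> c /orP[hc|hc]; first exact: hy.
      by exfalso; have hc2 := ltn_ord c; slia.
    have := reach_le_cat (hp (leqnn _) hag) hlast.
    apply: reach_le_mono; slia.
- by move=> ->; rewrite eqxx.
Qed.

Lemma H0_spanner : is_kTC_spanner k e H0.
Proof.
apply/andP; split.
- by apply/forall_inP => p; apply: H0_tc.
- apply/forallP => u; apply/forallP => v; apply/implyP; exact: H0_reach.
Qed.


Definition fB (t : 'I_k * BV k m * 'I_m) : V * V :=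
  let: (i, x, a) := t in
  (inl (inord i, x), inl (inord i.+1, [ffun c => if c == i then a else x c])).
Definition fA (q : A * B) : V * V := (inl (inord k, psi q.1), inr q.2).

Lemma card_Ge : #|Ge| <= k * m ^ k * m + #|[set q : A * B | E q.1 q.2]|.
Proof.
have sub : Ge \subset fB @: setT :|: fA @: [set q : A * B | E q.1 q.2].
  apply/subsetP => p; rewrite inE; case: p => [[[i x]|b] [[j y]|b']] //=.
  - case/andP => /eqP hj /forallP hxy.
    have hik : i < k by rewrite -ltnS -hj ltn_ord.
    rewrite inE; apply/orP; left; apply/imsetP; exists (Ordinal hik, x, y (Ordinal hik)); first by rewrite inE.
    rewrite /fB /=.
    have -> : inord i = i by apply: val_inj; rewrite /= inordK.
    have -> : inord i.+1 = j by apply: val_inj; rewrite /= inordK // -hj ltn_ord.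
    congr (_, inl (_, _)); apply/ffunP => c; rewrite ffunE.
    case: eqP => [->//|hc]; have /implyP h := hxy c.
    apply/esym/eqP; apply: h; apply/eqP => hc'; apply: hc; exact: val_inj.
  - case/andP => /eqP hi hE.
    rewrite inE; apply/orP; right; apply/imsetP; exists (phi x, b'); first by rewrite inE.
    rewrite /fA /= Hpsi1.
    by have -> : inord k = i by apply: val_inj; rewrite /= inordK.
apply: leq_trans (subset_leq_card sub) _.
apply: leq_trans (leq_card_setU _ _).1 _; apply: leq_add; last exact: leq_imset_card.
apply: leq_trans (leq_imset_card _ _) _.
by rewrite cardsT !card_prod card_ffun !card_ord.
Qed.

Variable D : nat.
Hypothesis HD : forall a, nblocks E blk a <= D.

Lemma card_EAB : #|[set q : A * B | E q.1 q.2]| <= #|A| * (D * s).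
Proof.
have sub : [set q : A * B | E q.1 q.2] \subset \bigcup_(a : A) ((pair a) @: [set b | E a b]).
  apply/subsetP => [[a b]]; rewrite inE /= => h; apply/bigcupP; exists a => //.
  by apply: imset_f; rewrite inE.
apply: leq_trans (subset_leq_card sub) _; apply: leq_trans (card_bigcup_le _ _) _.
rewrite -sum_nat_const; apply: leq_sum => a _.
apply: leq_trans (leq_imset_card _ _) _.
have sub2 : [set b | E a b] \subset \bigcup_(i in blk @: [set b | E a b]) [set b | blk b == i].
  apply/subsetP => b hb; apply/bigcupP; exists (blk b); first exact: imset_f.
  by rewrite inE.
apply: leq_trans (subset_leq_card sub2) _; apply: leq_trans (card_bigcup_le _ _) _.
under eq_bigr => i _ do rewrite Hblk.
rewrite sum_nat_const; apply: leq_mul => //; exact: HD.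
Qed.

Lemma card_Hc : #|Hc| <= #|C| * m ^ 2.
Proof.
set S := [set q : BV k m * BV k m | (phi q.1 \in C) && [forall c : 'I_k, (c < k') ==> (q.2 c == q.1 c)]].
pose fC (q : BV k m * BV k m) : V * V := (inl (inord k', q.2), inl (inord k, q.1)).
have sub : Hc \subset fC @: S.
  apply/subsetP => p; rewrite inE; case: p => [[[i w]|b] [[j y]|b']] //=.
  case/andP => /andP[/andP[/eqP hi /eqP hj] hC] hw.
  apply/imsetP; exists (y, w); first by rewrite inE hC hw.
  rewrite /fC /=.
  have -> : inord k' = i by apply: val_inj; rewrite /= (inordK k'_lt).
  by have -> : inord k = j by apply: val_inj; rewrite /= (inordK k_lt).
apply: leq_trans (subset_leq_card sub) _; apply: leq_trans (leq_imset_card _ _) _.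
have sub2 : S \subset \bigcup_(y | phi y \in C)
    ((pair y) @: [set w : BV k m | [forall c : 'I_k, (c < k') ==> (w c == y c)]]).
  apply/subsetP => [[y w]]; rewrite inE /= => /andP[hC hw]; apply/bigcupP; exists y => //.
  by apply: imset_f; rewrite inE.
apply: leq_trans (subset_leq_card sub2) _; apply: leq_trans (card_bigcup_le _ _) _.
apply: (@leq_trans (\sum_(y | phi y \in C) m ^ 2)).
  apply: leq_sum => y _; apply: leq_trans (leq_imset_card _ _) _.
  have := @desc_bound k' y (ltnW (ltnW (leqnn _))).
  have e2 : k - k' = 2 by rewrite -addn2 addKn.
  by rewrite e2.
rewrite sum_nat_cond_const leq_mul2r; apply/orP; right.
have sub3 : [set y | phi y \in C] \subset psi @: C.
  by apply/subsetP => y; rewrite inE => hy; apply/imsetP; exists (phi y); rewrite ?Hpsi1.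
exact: leq_trans (subset_leq_card sub3) (leq_imset_card _ _).
Qed.

Hypothesis Hs0 : 0 < s.

Lemma cover_count : #|I| <= #|C| * D.
Proof.
have sub : [set: I] \subset \bigcup_(c in C) (blk @: [set b | E c b]).
  apply/subsetP => i _.
  have : 0 < #|[set b | blk b == i]| by rewrite Hblk.
  case/card_gt0P => b; rewrite inE => /eqP <-.
  have [c hc hEc] := exists_inP (forallP HC b).
  by apply/bigcupP; exists c => //; apply: imset_f; rewrite inE.
rewrite -cardsT; apply: leq_trans (subset_leq_card sub) _.
apply: leq_trans (card_bigcup_le _ _) _.
rewrite -sum_nat_const; apply: leq_sum => c _; exact: HD.
Qed.

Lemma upper_card : #|H0| <= k * m ^ k * m + #|A| * (D * s) + #|C| * m ^ 2.
Proof.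
apply: leq_trans (leq_card_setU _ _).1 _; apply: leq_add => //.
  apply: leq_trans card_Ge _; rewrite leq_add2l; exact: card_EAB.
exact: card_Hc.
Qed.

End Upper.
End Graph.

Ltac snia := repeat (match goal with
  | H : is_true (_ <= _) |- _ => move/ssrnat.leP: H => H
  end);
  (match goal with
   | |- is_true (_ <= _) => apply/ssrnat.leP
   | _ => idtac end);
  repeat (match goal with H : context [addn] |- _ => rewrite -plusE in H
  | H : context [muln] |- _ => rewrite -multE in H end);
  rewrite -?plusE -?multE; nia.

Import Order.TTheory GRing.Theory Num.Theory.
Local Open Scope ring_scope.

Theorem mainTheorem10 (k : nat) (hk : (2 <= k)%N) :
  exists (c1 c2 : rat), 0 < c1 /\ 0 < c2 /\
  exists N : nat,
  forall (m s : nat) (A B : finType) (phi : BV k m -> A)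
    (E : A -> B -> bool) (blk : B -> 'I_(m ^ k)),
    (N <= m ^ k)%N ->
    bijective phi ->
    (* block size b'/a' = n^{3/(2k)} with n = m^k *)
    (s ^ (2 * k) = (m ^ k) ^ 3)%N ->
    (forall i : 'I_(m ^ k), #|[set b | blk b == i]| = s) ->
    nice_blocks E blk ->
    (* each v in A adjacent to at most n^{1/(5k)} blocks *)
    (forall v : A, (nblocks E blk v ^ (5 * k) <= m ^ k)%N) ->
    (forall b : B, exists v : A, E v b) ->
    c1 * (opt_nsc E)%:R * (m ^ 2)%:R <= (S_k k (gedge phi E))%:R /\
    (S_k k (gedge phi E))%:R <= c2 * (opt_nsc E)%:R * (m ^ 2)%:R.
Proof.
case: k hk => [|[|k']] // _.
exists (3%:R^-1), (k'.+4)%:R; split; first by rewrite invr_gt0 ltr0n.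
split; first by rewrite ltr0n.
exists 1%N => m s A B phi E blk hN hbij hs hblk hnice hnbl hnb.
have hm : (0 < m)%N by move: hN; rewrite expn_gt0 orbF.
have hs2 : (s ^ 2 = m ^ 3)%N.
  apply: (@expIn k'.+2) => //=.
  by rewrite -expnM hs -!expnM mulnC.
have hms : (m <= s)%N.
  rewrite -(@leq_exp2r _ _ 2) // hs2; exact: leq_pexp2l.
have hs0 : (0 < s)%N by apply: leq_trans hm hms.
have [psi h1 h2] := hbij.
have [C [HC hopt]] : exists C, covers E C /\ opt_nsc E = #|C|.
  apply: (@min_card_attained _ _ setT); apply/forallP => b.
  by have [v hv] := hnb b; apply/exists_inP; exists v; rewrite ?inE.
set D := \max_(a : A) nblocks E blk a.
have HD : forall a, (nblocks E blk a <= D)%N by move=> a; exact: leq_bigmax.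
have HD5 : (D ^ 5 <= m)%N.
  rewrite /D; apply: (big_ind (fun x => x ^ 5 <= m)%N) => //.
  - by move=> x y hx hy; case: (leqP x y).
  - by move=> a _; move: (hnbl a); rewrite expnM leq_exp2r.
have HD4 : (D ^ 4 <= m)%N.
  case: (posnP D) => [->|hD]; first by rewrite exp0n.
  by apply: leq_trans HD5; apply: leq_pexp2l.
have HDm : (D <= m)%N.
  case: (posnP D) => [->|hD] //.
  by apply: leq_trans HD4; rewrite -{1}[D]expn1; apply: leq_pexp2l.
have HDs : (D * D * s <= m ^ 2)%N.
  rewrite -(@leq_exp2r _ _ 2) // !expnMn hs2 -!expnD.
  rewrite (_ : (m ^ (2 + 2) = m * m ^ 3)%N); last by rewrite -expnS.
  exact: leq_mul.
have hA : #|A| = (m ^ k'.+2)%N.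
  by rewrite -(bij_eq_card hbij) card_ffun !card_ord.
have hX : (m ^ k'.+2 <= #|C| * D)%N.
  have := cover_count hblk HC HD hs0; by rewrite card_ord.
have hsp := H0_spanner h2 HC.
have hup : (S_k k'.+2 (gedge phi E) <= k'.+4 * opt_nsc E * m ^ 2)%N.
  apply: leq_trans (min_card_le hsp) _.
  apply: leq_trans (upper_card hblk h1 C HD) _.
  rewrite hA hopt.
  have f1 : (k'.+2 * (m ^ k'.+2 * m) <= k'.+2 * (#|C| * (m * m)))%N.
    rewrite leq_mul2l; apply/orP; right.
    apply: leq_trans (leq_mul hX (leqnn m)) _.
    by rewrite -mulnA leq_mul2l leq_mul2r HDm !orbT.
  have f2 : (m ^ k'.+2 * (D * s) <= #|C| * (m * m))%N.
    apply: leq_trans (leq_mul hX (leqnn _)) _.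
    rewrite -mulnA leq_mul2l mulnA mulnn HDs orbT //.
  rewrite -mulnn; move: f1 f2; set X := (m ^ k'.+2)%N; set O := #|C| => f1 f2.
  snia.
have [Hm [hHm eqS]] : exists Hm, is_kTC_spanner k'.+2 (gedge phi E) Hm /\
    S_k k'.+2 (gedge phi E) = #|Hm| := min_card_attained hsp.
have hlow : (m ^ 2 * opt_nsc E <= 3 * S_k k'.+2 (gedge phi E))%N.
  by rewrite eqS; apply: (lower hblk hnice hnb hm hms hbij hHm).
split.
- rewrite -mulrA -natrM mulrC ler_pdivrMr ?ltr0n // mulrC -natrM ler_nat mulnC.
  exact: hlow.
- by rewrite -!natrM ler_nat.
Qed.
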